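(* For every positive integer $k$ and $0<\delta\le1$, the mechanism $\mathcal{SA}^k_\delta$ admits a pure Nash equilibrium for every collection $A$, is anonymous, and is $(\delta+\frac1k)$-close to the Pareto frontier in all equilibria: for every collection $A$ and every pure Nash equilibrium outcome $x$ of $\Gamma_{\mathcal{SA}^k_\delta}(A)$ there is no $y\in\mathrm{conv}(A)$ with $y_1>x_1+\delta+\frac1k$ and $y_2>x_2+\delta+\frac1k$.
   Context: Two players bargain over a collection (multiset) of $n$ alternatives $A=(a^j)_{j\in[n]}\subset[0,1]^2$, $a^j_i$ being player $i$'s utility; players are risk neutral and the outcome of a profile is the vector of expected utilities. A $k$-uniform distribution over $[n]$ is the uniform distribution over a multiset of size $k$ of elements of $[n]$; let $k$-$UN([n])$ be the (finite) set of these. In the mechanism $\mathcal{SA}^k_\delta$ each player $i$ submits a set $L_i\subseteq k$-$UN([n])$; a $k$-uniform distribution $\mu$ is selected as follows: uniformly from all of $k$-$UN([n])$ if $L_1=L_2=\emptyset$; uniformly from $L_1\cup L_2$ if $L_1\cap L_2=\emptyset\ne L_1\cup L_2$; and with probability $1-\delta$ uniformly from $L_1\cap L_2$ and with probability $\delta$ uniformly from $L_1\cup L_2$ if $L_1\cap L_2\ne\emptyset$; then an index is drawn from $\mu$. A mechanism is anonymous if both players have the same signal set and the allocation map is symmetric in the two signals. *)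

(* Defs.v *)
From HB Require Import structures.
From mathcomp Require Import all_boot all_order all_algebra.
Set Implicit Arguments. Unset Strict Implicit. Unset Printing Implicit Defensive.
Import Order.TTheory GRing.Theory Num.Theory.
Local Open Scope ring_scope.

(* A collection of n alternatives: alternative j gives utility (A j).1 to
   player 1 and (A j).2 to player 2, all in [0,1]. *)
Definition collection (R : realFieldType) (n : nat) (A : 'I_n -> R * R) : Prop :=
  forall j, (0 <= (A j).1 <= 1) /\ (0 <= (A j).2 <= 1).

Definition in_conv (R : realFieldType) (n : nat) (A : 'I_n -> R * R) (y : R * R) : Prop :=
  exists lam : 'I_n -> R,
    (forall j, 0 <= lam j) /\ \sum_j lam j = 1 /\
    y = (\sum_j lam j * (A j).1, \sum_j lam j * (A j).2).

(* A two-player mechanism over [n]: signal set of each player (the same set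
   for both) and an allocation map from signal profiles to distributions on [n]. *)
Unset Implicit Arguments.
Record mechanism (R : realFieldType) (n : nat) := Mechanism {
  signal : Type;
  alloc : signal -> signal -> 'I_n -> R }.
Arguments signal {R n} _.
Arguments alloc {R n} _ _ _ _.
Set Implicit Arguments.

Definition outcome (R : realFieldType) (n : nat) (M : mechanism R n)
  (A : 'I_n -> R * R) (s1 s2 : signal M) : R * R :=
  (\sum_j alloc M s1 s2 j * (A j).1, \sum_j alloc M s1 s2 j * (A j).2).
Arguments outcome {R n} M A s1 s2.

Definition is_PNE (R : realFieldType) (n : nat) (M : mechanism R n)
  (A : 'I_n -> R * R) (s1 s2 : signal M) : Prop :=
  (forall s1', (outcome M A s1' s2).1 <= (outcome M A s1 s2).1) /\
  (forall s2', (outcome M A s1 s2').2 <= (outcome M A s1 s2).2).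
Arguments is_PNE {R n} M A s1 s2.

(* Anonymity: same signal set (built in) and symmetric allocation map. *)
Definition anonymous (R : realFieldType) (n : nat) (M : mechanism R n) : Prop :=
  forall s1 s2 : signal M, alloc M s1 s2 =1 alloc M s2 s1.
Arguments anonymous {R n} M.

(* k-uniform distributions over [n]: uniform distributions over multisets of
   size k of elements of [n]; a multiset is given by its multiplicity function
   (a k-uniform distribution determines its multiset, so this is a bijection). *)
Definition kUN (n k : nat) : finType :=
  {m : {ffun 'I_n -> 'I_k.+1} | \sum_j (m j : nat) == k}.

Definition kUN_prob (R : realFieldType) (n k : nat) (mu : kUN n k) (j : 'I_n) : R :=
  ((val mu j : nat)%:R) / k%:R.
Arguments kUN_prob R {n k} mu j.

Definition unif (R : realFieldType) (n k : nat) (S : {set kUN n k}) (mu : kUN n k) : R :=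
  if mu \in S then (#|S|%:R)^-1 else 0.
Arguments unif R {n k} S mu.

Definition SA_select (R : realFieldType) (n k : nat) (delta : R)
  (L1 L2 : {set kUN n k}) (mu : kUN n k) : R :=
  if (L1 == set0) && (L2 == set0) then unif R [set: kUN n k] mu
  else if L1 :&: L2 == set0 then unif R (L1 :|: L2) mu
  else (1 - delta) * unif R (L1 :&: L2) mu + delta * unif R (L1 :|: L2) mu.
Arguments SA_select R {n k} delta L1 L2 mu.

Definition SA (R : realFieldType) (n k : nat) (delta : R) : mechanism R n :=
  @Mechanism R n {set kUN n k}
    (fun L1 L2 j => \sum_(mu : kUN n k) SA_select R delta L1 L2 mu * kUN_prob R mu j).

(* Main.v *)
Require Import Defs.
From HB Require Import structures.
From mathcomp Require Import all_boot all_order all_algebra.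
From mathcomp Require Import ring lra.
Import Order.TTheory GRing.Theory Num.Theory.
Set Implicit Arguments. Unset Strict Implicit. Unset Printing Implicit Defensive.
Local Open Scope ring_scope.

Section Gen.
Variable R : realFieldType.
Variable T : finType.
Variable delta : R.
Hypothesis d0 : 0 < delta.
Hypothesis d1 : delta <= 1.

Definition unifG (S : {set T}) (t : T) : R := if t \in S then (#|S|%:R)^-1 else 0.
Definition selG (L1 L2 : {set T}) (t : T) : R :=
  if (L1 == set0) && (L2 == set0) then unifG [set: T] t
  else if L1 :&: L2 == set0 then unifG (L1 :|: L2) t
  else (1 - delta) * unifG (L1 :&: L2) t + delta * unifG (L1 :|: L2) t.
Definition avg (V : T -> R) (S : {set T}) : R := (#|S|%:R)^-1 * \sum_(t in S) V t.
Definition F (V : T -> R) L1 L2 := \sum_t selG L1 L2 t * V t.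

Lemma unif_sum V S : \sum_t unifG S t * V t = avg V S.
Proof.
rewrite /avg mulr_sumr [RHS]big_mkcond /=; apply: eq_bigr => t _.
by rewrite /unifG; case: (t \in S); rewrite ?mul0r.
Qed.

Lemma FE V L1 L2 : F V L1 L2 =
  if (L1 == set0) && (L2 == set0) then avg V [set: T]
  else if L1 :&: L2 == set0 then avg V (L1 :|: L2)
  else (1 - delta) * avg V (L1 :&: L2) + delta * avg V (L1 :|: L2).
Proof.
rewrite /F /selG; case: ifP => _; first exact: unif_sum.
case: ifP => _; first exact: unif_sum.
rewrite -!unif_sum !mulr_sumr -big_split /=; apply: eq_bigr => t _; ring.
Qed.

Lemma FC V L1 L2 : F V L1 L2 = F V L2 L1.
Proof. by rewrite !FE andbC setIC setUC. Qed.

Lemma card_pos (S : {set T}) : S != set0 -> 0 < (#|S|%:R : R).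
Proof. by move=> H; rewrite ltr0n card_gt0. Qed.

Lemma avg_le V S b : S != set0 -> (forall t, t \in S -> V t <= b) -> avg V S <= b.
Proof.
move=> SN Hb; rewrite /avg -(ler_pM2l (card_pos SN)) mulrA mulfV ?mul1r; last first.
  by rewrite gt_eqF // card_pos.
have -> : (#|S|%:R : R) * b = \sum_(t in S) b by rewrite sumr_const mulr_natl.
by apply: ler_sum.
Qed.

Lemma avg_ge V S b : S != set0 -> (forall t, t \in S -> b <= V t) -> b <= avg V S.
Proof.
move=> SN Hb; rewrite /avg -(ler_pM2l (card_pos SN)) mulrA mulfV ?mul1r; last first.
  by rewrite gt_eqF // card_pos.
have -> : (#|S|%:R : R) * b = \sum_(t in S) b by rewrite sumr_const mulr_natl.
by apply: ler_sum.
Qed.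

Lemma avg_sub V S a : S != set0 ->
  avg V S - a = (#|S|%:R)^-1 * \sum_(t in S) (V t - a).
Proof.
move=> SN; have cN : (#|S|%:R : R) != 0 by rewrite gt_eqF // card_pos.
by rewrite sumrB sumr_const /avg mulrBr -[a *+ _]mulr_natl mulKf.
Qed.


Lemma super (V : T -> R) (L1 L2 : {set T}) (a : R) :
  \sum_(t in L1 :|: L2) (V t - a) = 0 ->
  (forall t, t \in L1 -> t \notin L2 -> a <= V t) ->
  (forall t, t \notin L1 :|: L2 -> V t <= a) ->
  forall W : {set T}, L2 \subset W -> W != set0 -> avg V W <= a.
Proof.
move=> H0 H1 H2 W sW WN; rewrite -subr_le0 avg_sub //.
apply: mulr_ge0_le0; first by rewrite invr_ge0 ler0n.
rewrite -[X in _ <= X]H0.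
rewrite big_mkcond [X in _ <= X]big_mkcond /=; apply: ler_sum => t _.
case tW: (t \in W); case tU: (t \in L1 :|: L2) => //; try by rewrite lexx.
- by rewrite subr_le0; apply: H2; rewrite tU.
- move: tU; rewrite inE => /orP[tL1|tL2]; last by rewrite (subsetP sW) in tW.
  rewrite subr_ge0; apply: H1 => //; apply/negP => tL2.
  by rewrite (subsetP sW) in tW.
Qed.

Lemma BR (V : T -> R) (L1 L2 : {set T}) (a b x : R) :
  L1 :|: L2 != set0 ->
  \sum_(t in L1 :|: L2) (V t - a) = 0 ->
  (forall t, t \in L1 -> t \notin L2 -> a <= V t) ->
  (forall t, t \notin L1 :|: L2 -> V t <= a) ->
  (forall t, t \in L2 -> V t <= b) ->
  a <= b -> (1 - delta) * b + delta * a <= x ->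
  forall L : {set T}, F V L L2 <= x.
Proof.
move=> UN H0 H1 H2 H3 ab hx L.
have ax : a <= x.
  apply: le_trans hx; have : 0 <= 1 - delta by rewrite subr_ge0.
  move=> h; have := ler_wpM2l h ab; lra.
have sp := super H0 H1 H2.
rewrite FE; case: ifP => [/andP[/eqP LE /eqP L2E]|hne].
  apply: le_trans ax; apply: sp; first by rewrite L2E sub0set.
  by apply: contraNneq UN => /setP h; apply/eqP/setP => t; have := h t; rewrite !inE.
case: ifP => hI.
  apply: le_trans ax; apply: sp; first exact: subsetUr.
  by rewrite setU_eq0 hne.
apply: le_trans hx.
have IN : L :&: L2 != set0 by rewrite hI.
have UN' : L :|: L2 != set0.
  apply: contraNneq IN => /setP h; apply/eqP/setP => t; have := h t; rewrite !inE.
  by case: (t \in L); case: (t \in L2).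
apply: lerD.
  apply: ler_wpM2l; first by rewrite subr_ge0.
  by apply: avg_le => // t; rewrite inE => /andP[_]; apply: H3.
apply: ler_wpM2l; first exact: ltW.
by apply: sp => //; apply: subsetUr.
Qed.


Lemma avg1 (V : T -> R) t : avg V [set t] = V t.
Proof. by rewrite /avg cards1 big_set1 invr1 mul1r. Qed.

Lemma avg_add (V : T -> R) (U : {set T}) t : t \notin U -> U != set0 ->
  avg V (t |: U) <= avg V U -> V t <= avg V U.
Proof.
move=> tU UN; rewrite /avg cardsU1 tU big_setU1 //=.
set c := (#|U|%:R : R); set s := \sum_(i in U) V i.
have c0 : 0 < c by apply: card_pos.
have -> : ((1 + #|U|)%N%:R : R) = c + 1 by rewrite natrD addrC.
set q := c^-1 * s; have sE : s = c * q by rewrite /q mulrA mulfV ?mul1r // gt_eqF.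
rewrite sE => h.
have c1 : 0 < c + 1 by lra.
have ci : 0 < (c + 1)^-1 by rewrite invr_gt0.
have : V t + c * q <= (c + 1) * q.
  by rewrite -(ler_pM2l ci) mulKf // gt_eqF.
lra.
Qed.

Lemma close (V : T -> R) (L1 L2 : {set T}) mu :
  (forall t, 0 <= V t <= 1) ->
  (forall L, F V L L2 <= F V L1 L2) ->
  (mu \in L2 -> V mu - delta <= F V L1 L2) /\
  (mu \notin L1 -> mu \notin L2 -> V mu <= F V L1 L2).
Proof.
move=> V01 H; split.
  move=> muL2; apply: le_trans (H [set mu]); rewrite FE.
  have -> : ([set mu] == set0) = false by apply/negbTE/set0Pn; exists mu; rewrite inE.
  have -> : [set mu] :&: L2 = [set mu] by apply/setIidPl; rewrite sub1set.
  have -> : [set mu] :|: L2 = L2 by apply/setUidPr; rewrite sub1set.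
  have -> : ([set mu] == set0) = false by apply/negbTE/set0Pn; exists mu; rewrite inE.
  rewrite avg1.
  have a0 : 0 <= avg V L2.
    by apply: avg_ge => [|t _]; [apply/set0Pn; exists mu | case/andP: (V01 t)].
  have := V01 mu; case/andP => v0 v1.
  have : 0 <= delta * avg V L2 by apply: mulr_ge0 => //; apply: ltW.
  have : delta * V mu <= delta by rewrite -[X in _ <= X]mulr1; apply: ler_wpM2l => //; apply: ltW.
  rewrite /= mulrBl mul1r; lra.
move=> n1 n2.
have s1N : ([set mu] == set0) = false by apply/negbTE/set0Pn; exists mu; rewrite inE.
have muN : (mu |: L1 == set0) = false by apply/negbTE/set0Pn; exists mu; rewrite !inE eqxx.
have IE : (mu |: L1) :&: L2 = L1 :&: L2.
  apply/setP => t; rewrite !inE; case: eqP => [->|] //=.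
  by rewrite (negbTE n2) andbF.
have UE : (mu |: L1) :|: L2 = mu |: (L1 :|: L2) by rewrite setUA.
have nU : mu \notin L1 :|: L2 by rewrite inE negb_or n1.
case E: ((L1 == set0) && (L2 == set0)).
  move/andP: E => [/eqP L1E /eqP L2E].
  have := H [set mu]; rewrite !FE L1E L2E s1N eqxx /= setI0 eqxx setU0 avg1.
  by [].
have UN : L1 :|: L2 != set0 by rewrite setU_eq0 E.
case I: (L1 :&: L2 == set0).
  have := H (mu |: L1); rewrite !FE E I muN /= IE I UE => h.
  exact: avg_add.
have L2N : (L2 == set0) = false.
  apply/negbTE; apply: contraFN I => /eqP ->; by rewrite setI0.
have := H (L1 :\: L2); rewrite !FE E I L2N andbF.
have -> : (L1 :\: L2) :&: L2 = set0.
  by apply/setP => t; rewrite !inE; case: (t \in L2); rewrite ?andbF.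
have -> : (L1 :\: L2) :|: L2 = L1 :|: L2.
  by apply/setP => t; rewrite !inE; case: (t \in L2); rewrite ?orbT ?orbF.
rewrite eqxx => hU.
have := H (mu |: L1); rewrite !FE E I muN /= IE I UE => h.
have h2 : avg V (mu |: (L1 :|: L2)) <= avg V (L1 :|: L2).
  rewrite -(ler_pM2l d0); lra.
apply: le_trans hU; exact: avg_add.
Qed.


Lemma sum_avg (V : T -> R) (U : {set T}) : U != set0 ->
  \sum_(t in U) (V t - avg V U) = 0.
Proof.
move=> UN; have := avg_sub V (avg V U) UN; rewrite subrr => /esym /eqP.
rewrite mulf_eq0 invr_eq0 (gt_eqF (card_pos UN)) /= => /eqP; done.
Qed.

Lemma avg_addE (V : T -> R) (W : {set T}) t : t \notin W ->
  (#|W|%:R + 1) * avg V (t |: W) = V t + #|W|%:R * avg V W.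
Proof.
move=> tW; rewrite /avg cardsU1 tW big_setU1 //= mulrA.
have -> : ((1 + #|W|)%N%:R : R) = #|W|%:R + 1 by rewrite natrD addrC.
rewrite mulfV ?mul1r; last by rewrite gt_eqF // ltr_wpDl.
have [->|WN] := eqVneq W set0; first by rewrite big_set0 cards0 !mul0r addr0.
by rewrite mulrA mulfV ?mul1r // gt_eqF // card_pos.
Qed.


Definition K2 (V1 V2 : T -> R) (U : {set T}) :=
  [forall t, (t \notin U) ==> (V1 t <= avg V1 U) && (V2 t <= avg V2 U)].

Lemma K3 (V1 V2 : T -> R) (U : {set T}) :
  U != set0 -> K2 V1 V2 U ->
  (forall U' : {set T}, U' != set0 -> K2 V1 V2 U' -> (#|U| <= #|U'|)%N) ->
  forall t, t \in U -> (avg V1 U <= V1 t) || (avg V2 U <= V2 t).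
Proof.
move=> UN KU Umin t tU; apply: contraT; rewrite negb_or -!ltNge => /andP[h1 h2].
set U' := U :\ t.
have UE : U = t |: U' by rewrite setD1K.
have U'N : U' != set0.
  apply/negP => /eqP U'0.
  by move: h1; rewrite UE U'0 setU0 avg1 ltxx.
have tU' : t \notin U' by rewrite !inE eqxx.
have mono : forall V, V t < avg V U -> avg V U <= avg V U'.
  move=> V hV; have := avg_addE V tU'; rewrite -UE.
  have c0 := card_pos U'N.
  move: hV; move: (avg V U) (avg V U') (V t) (#|U'|%:R : R) c0 => A B v c c0 hv hE.
  nra.
have m1 := mono V1 h1; have m2 := mono V2 h2.
have K' : K2 V1 V2 U'.
  apply/forallP => x; apply/implyP => xU'.
  case: (eqVneq x t) => [->|xt].
    by rewrite (le_trans (ltW h1) m1) (le_trans (ltW h2) m2).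
  have xU : x \notin U by move: xU'; rewrite !inE xt.
  move/forallP: KU => /(_ x); rewrite xU /= => /andP[k1 k2].
  by rewrite (le_trans k1 m1) (le_trans k2 m2).
have := Umin U' U'N K'; rewrite (cardsD1 t U) tU.
by rewrite add1n ltnn.
Qed.


Lemma exists_eq (V1 V2 : T -> R) (t0 : T) : exists L1 L2 : {set T},
  (forall L, F V1 L L2 <= F V1 L1 L2) /\ (forall L, F V2 L1 L <= F V2 L1 L2).
Proof.
have PT : [set: T] != set0 by apply/set0Pn; exists t0; rewrite inE.
have KT : K2 V1 V2 [set: T] by apply/forallP => x; rewrite inE.
case: (@arg_minnP _ [set: T] (fun U => (U != set0) && K2 V1 V2 U) (fun U => #|U|));
  first by rewrite PT KT.
move=> U /andP[UN KU] Umin.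
have K3U := K3 UN KU (fun U' a b => Umin U' (introT andP (conj a b))).
set a1 := avg V1 U; set a2 := avg V2 U.
have S1 := sum_avg V1 UN; have S2 := sum_avg V2 UN.
have out : forall t, t \notin U -> (V1 t <= a1) /\ (V2 t <= a2).
  by move=> t tU; move/forallP: KU => /(_ t); rewrite tU /= => /andP.
case: (boolP [exists c, (c \in U) && (a1 <= V1 c) && (a2 <= V2 c)]) => [ex|nex].
  case/existsP: ex => c0 Qc0.
  case: (@arg_maxP _ _ _ c0 (fun c => (c \in U) && (a1 <= V1 c) && (a2 <= V2 c))
     (fun c => V1 c + V2 c) Qc0) => c /andP[/andP[cU ac1] ac2] cmax.
  have par : forall t, V1 c < V1 t -> V2 c < V2 t -> False.
    move=> t h1 h2.
    have tU : t \in U.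
      apply: contraT => tU; have [o1 _] := out t tU.
      by move: (le_lt_trans ac1 h1); rewrite ltNge o1.
    have := cmax t; rewrite tU (le_trans ac1 (ltW h1)) (le_trans ac2 (ltW h2)) /=.
    move=> /(_ isT); rewrite leNgt => /negP; apply; exact: ltrD.
  set L1 := c |: [set t in U | (t != c) && (a1 <= V1 t) && (V2 t <= V2 c)].
  set L2 := c |: [set t in U | (t != c) && ~~ ((a1 <= V1 t) && (V2 t <= V2 c))].
  have UE : L1 :|: L2 = U.
    apply/setP => t; rewrite !inE; case: (eqVneq t c) => [->|tc] /=; first by rewrite cU.
    by case: (t \in U); case: ((a1 <= V1 t) && (V2 t <= V2 c)).
  have IE : L1 :&: L2 = [set c].
    apply/setP => t; rewrite !inE; case: (eqVneq t c) => [->|tc] //=.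
    by case: (t \in U); case: ((a1 <= V1 t) && (V2 t <= V2 c)).
  have U0 : ((L1 == set0) && (L2 == set0)) = false.
    by apply/negbTE; rewrite negb_and; apply/orP; left; apply/set0Pn; exists c; rewrite !inE eqxx.
  have I0 : (L1 :&: L2 == set0) = false.
    by rewrite IE; apply/negbTE/set0Pn; exists c; rewrite inE.
  exists L1, L2; split.
    apply: (@BR V1 L1 L2 a1 (V1 c)); rewrite ?UE //.
    - by move=> t; rewrite !inE => /orP[/eqP->|/andP[_ /andP[/andP[_ h] _]]] _.
    - by move=> t /out [].
    - move=> t; rewrite !inE => /orP[/eqP->//|/and3P[tU tc hn]].
      rewrite leNgt; apply/negP => h1.
      apply: (par t h1); move: hn; rewrite (le_trans ac1 (ltW h1)) /= -ltNge; done.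
    - by rewrite FE U0 I0 IE UE avg1.
  move=> L; rewrite FC [F V2 L1 L2]FC; move: L.
  apply: (@BR V2 L2 L1 a2 (V2 c)); rewrite ?[L2 :|: L1]setUC ?UE //.
  - move=> t; rewrite !inE => /orP[/eqP->|/and3P[tU tc hn]]; first by rewrite eqxx.
    move=> _; case: (leP a1 (V1 t)) hn => h1 /=.
      by rewrite -ltNge => /ltW h; apply: le_trans ac2 h.
    by move=> _; have := K3U t tU; rewrite leNgt h1 /=.
  - by move=> t /out [].
  - by move=> t; rewrite !inE => /orP[/eqP->//|/andP[_ /andP[_ ->]]].
  - by rewrite FE andbC U0 setIC I0 IE setUC UE avg1.
have nb : forall t, t \in U -> a1 <= V1 t -> V2 t < a2.
  move=> t tU h; rewrite ltNge; apply/negP => h2; move/negP: nex; apply.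
  by apply/existsP; exists t; rewrite tU h h2.
set L1 := [set t in U | a1 <= V1 t]; set L2 := [set t in U | V1 t < a1].
have UE : L1 :|: L2 = U.
  by apply/setP => t; rewrite !inE -andb_orr; case: (leP a1 (V1 t)); rewrite ?orbT ?orbF andbT.
have IE : L1 :&: L2 = set0.
  by apply/setP => t; rewrite !inE; case: (t \in U); case: (leP a1 (V1 t)).
have U0 : ((L1 == set0) && (L2 == set0)) = false.
  apply/negP => /andP[/eqP h1 /eqP h2]; move: UN; by rewrite -UE h1 h2 setU0 eqxx.
exists L1, L2; split.
  apply: (@BR V1 L1 L2 a1 a1); rewrite ?UE //.
  - by move=> t; rewrite !inE => /andP[].
  - by move=> t /out [].
  - by move=> t; rewrite !inE => /andP[_ /ltW].
  - by rewrite FE U0 IE eqxx UE -/a1 -mulrDl subrK mul1r.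
move=> L; rewrite FC [F V2 L1 L2]FC; move: L.
apply: (@BR V2 L2 L1 a2 a2); rewrite ?[L2 :|: L1]setUC ?UE //.
- move=> t; rewrite !inE => /andP[tU h] _.
  by have := K3U t tU; rewrite leNgt h /=.
- by move=> t /out [].
- by move=> t; rewrite !inE => /andP[tU h]; apply/ltW/nb.
- by rewrite FE andbC U0 setIC IE eqxx setUC UE -/a2 -mulrDl subrK mul1r.
Qed.

End Gen.

Section Geo.
Variable R : realFieldType.
Variable I : finType.

Lemma zero_lam (lam w : I -> R) (P : pred I) :
  (forall j, 0 <= lam j) -> (forall j, P j -> w j < 0) ->
  \sum_(j | P j) lam j * w j = 0 -> \sum_(j | P j) lam j = 0.
Proof.
move=> l0 wn H.
have H' : \sum_(j | P j) lam j * (- w j) = 0.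
  by rewrite (eq_bigr (fun j => - (lam j * w j))) ?sumrN ?H ?oppr0 // => j _; rewrite mulrN.
have hnn : forall j, P j -> 0 <= lam j * - w j.
  move=> j Pj; apply: mulr_ge0 => //; rewrite oppr_ge0; exact: ltW (wn j Pj).
have h := psumr_eq0P hnn H'.
rewrite big1 // => j Pj; have := h _ Pj.
move/eqP; rewrite mulf_eq0 oppr_eq0 (negbTE (ltr0_neq0 (wn j Pj))) orbF. by move/eqP.
Qed.


Lemma geo (lam u v : I -> R) :
  (forall j, 0 <= lam j) -> \sum_j lam j = 1 ->
  \sum_j lam j * u j = 0 -> \sum_j lam j * v j = 0 ->
  (exists s, 0 <= u s /\ 0 <= v s) \/
  (exists s t, [/\ 0 <= u s, u t < 0 & 0 <= u s * v t - u t * v s]).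
Proof.
move=> l0 l1 su sv.
case: (boolP [exists s, (0 <= u s) && (0 <= v s)]) => [/existsP[s /andP[h1 h2]]|n1].
  by left; exists s.
case: (boolP [exists s, [exists t, [&& 0 <= u s, u t < 0 & 0 <= u s * v t - u t * v s]]])
  => [/existsP[s /existsP[t /and3P[h1 h2 h3]]]|n2].
  by right; exists s, t.
exfalso.
have hS : forall j, 0 <= u j -> v j < 0.
  move=> j h; rewrite ltNge; apply/negP => h'; move/negP: n1; apply.
  by apply/existsP; exists j; rewrite h h'.
have hP : forall s t, 0 <= u s -> u t < 0 -> u s * v t - u t * v s < 0.
  move=> s t h1 h2; rewrite ltNge; apply/negP => h3; move/negP: n2; apply.
  by apply/existsP; exists s; apply/existsP; exists t; rewrite h1 h2 h3.
pose P := fun j => 0 <= u j.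
set aP := \sum_(j | P j) lam j * u j; set aN := \sum_(j | ~~ P j) lam j * u j.
set bP := \sum_(j | P j) lam j * v j; set bN := \sum_(j | ~~ P j) lam j * v j.
have ea : aP + aN = 0 by rewrite -su (bigID P).
have eb : bP + bN = 0 by rewrite -sv (bigID P).
have D : \sum_(s | P s) \sum_(t | ~~ P t) lam s * lam t * (u t * v s - u s * v t)
    = bP * aN - aP * bN.
  rewrite /aP /bP !mulr_suml -sumrB; apply: eq_bigr => s _.
  rewrite !mulr_sumr -sumrB; apply: eq_bigr => t _; ring.
have D0 : bP * aN - aP * bN = 0.
  have -> : bP = - bN by lra.
  have -> : aP = - aN by lra.
  ring.
have nP : forall t, ~~ P t -> u t < 0 by move=> t; rewrite /P -ltNge.
have pos : forall s t, P s -> ~~ P t -> 0 < u t * v s - u s * v t.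
  move=> s t Ps Pt; have := hP s t Ps (nP t Pt); lra.
have nn : forall s, P s -> 0 <= \sum_(t | ~~ P t) lam s * lam t * (u t * v s - u s * v t).
  move=> s Ps; apply: sumr_ge0 => t Pt; apply: mulr_ge0; first exact: mulr_ge0.
  exact: ltW (pos s t Ps Pt).
have h1 := psumr_eq0P nn (etrans D D0).
have prod0 : forall s t, P s -> ~~ P t -> lam s * lam t = 0.
  move=> s t Ps Pt.
  have nn2 : forall t, ~~ P t -> 0 <= lam s * lam t * (u t * v s - u s * v t).
    move=> t' Pt'; apply: mulr_ge0; first exact: mulr_ge0.
    exact: ltW (pos s t' Ps Pt').
  have := psumr_eq0P nn2 (h1 _ Ps) Pt.
  by move/eqP; rewrite mulf_eq0 (gt_eqF (pos s t Ps Pt)) orbF => /eqP.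
have tot : \sum_(j | P j) lam j + \sum_(j | ~~ P j) lam j = 1 by rewrite -l1 [RHS](bigID P).
have : (\sum_(j | P j) lam j) * (\sum_(j | ~~ P j) lam j) = 0.
  rewrite mulr_suml big1 // => s Ps; rewrite mulr_sumr big1 // => t Pt; exact: prod0.
move/eqP; rewrite mulf_eq0 => /orP[/eqP lP|/eqP lN].
  have z : forall j, P j -> lam j = 0 by apply: psumr_eq0P => // j _.
  have aP0 : aP = 0 by rewrite /aP big1 // => j Pj; rewrite z // mul0r.
  have aN0 : aN = 0 by lra.
  have := zero_lam l0 nP aN0; lra.
have z : forall j, ~~ P j -> lam j = 0 by apply: psumr_eq0P => // j _.
have bN0 : bN = 0 by rewrite /bN big1 // => j Pj; rewrite z // mul0r.
have bP0 : bP = 0 by lra.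
have := zero_lam l0 hS bP0; lra.
Qed.

End Geo.

Lemma floorN (R : realFieldType) (k : nat) (r : R) :
  0 <= r <= k%:R -> exists p, (p <= k)%N /\ p%:R <= r /\ r <= p%:R + 1.
Proof.
elim: k r => [|k IH] r /andP[r0 rk].
  by exists 0%N; split => //; split; lra.
case: (lerP r k%:R) => h.
  have [p [pk [h1 h2]]] := IH r (introT andP (conj r0 h)).
  by exists p; split => //; apply: leqW.
exists k; split => //; split; first exact: ltW.
by move: rk; rewrite -natr1.
Qed.

Section KUN.
Variables (n k : nat).
Definition mkm (s t : 'I_n) (p : nat) : {ffun 'I_n -> 'I_k.+1} :=
  [ffun j => inord ((j == s) * p + (j == t) * (k - p))].

Lemma mkm_val s t p j : (p <= k)%N ->
  (mkm s t p j : nat) = ((j == s) * p + (j == t) * (k - p))%N.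
Proof.
move=> pk; rewrite ffunE inordK // ltnS.
by case: (j == s); case: (j == t); rewrite ?mul1n ?mul0n ?addn0 ?add0n ?subnKC ?leq_subr.
Qed.

Lemma sum_ind (f : 'I_n -> nat) s : (\sum_j (j == s) * f j)%N = f s.
Proof.
by rewrite (bigD1 s) //= eqxx mul1n big1 ?addn0 // => j /negbTE ->.
Qed.

Lemma mkm_sum s t p : (p <= k)%N -> \sum_j (mkm s t p j : nat) == k.
Proof.
move=> pk; rewrite (eq_bigr _ (fun j _ => mkm_val s t j pk)) big_split /=.
rewrite (sum_ind (fun _ => p)) (sum_ind (fun _ => (k - p)%N)); apply/eqP; exact: subnKC pk.
Qed.

Definition mk s t p (pk : (p <= k)%N) : kUN n k := exist _ (mkm s t p) (mkm_sum s t pk).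

Lemma sum_indR (R : realFieldType) (g : 'I_n -> R) s : \sum_j (j == s)%:R * g j = g s.
Proof.
by rewrite (bigD1 s) //= eqxx mul1r big1 ?addr0 // => j /negbTE ->; rewrite mul0r.
Qed.

Lemma mk_val (R : realFieldType) (f : 'I_n -> R) s t p (pk : (p <= k)%N) :
  \sum_j kUN_prob R (mk s t pk) j * f j =
  (p%:R / k%:R) * f s + ((k - p)%N%:R / k%:R) * f t.
Proof.
rewrite -(sum_indR (fun j => p%:R / k%:R * f j) s) -(sum_indR (fun j => (k - p)%N%:R / k%:R * f j) t).
rewrite -big_split /=; apply: eq_bigr => j _.
rewrite /kUN_prob /= mkm_val // natrD !natrM; ring.
Qed.

End KUN.

Lemma round (R : realFieldType) (n k : nat) (A : 'I_n -> R * R) (lam : 'I_n -> R) :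
  (0 < k)%N -> collection A -> (forall j, 0 <= lam j) -> \sum_j lam j = 1 ->
  exists mu : kUN n k,
    (\sum_j lam j * (A j).1) - k%:R^-1 <= \sum_j kUN_prob R mu j * (A j).1 /\
    (\sum_j lam j * (A j).2) - k%:R^-1 <= \sum_j kUN_prob R mu j * (A j).2.
Proof.
move=> k0 cA l0 l1.
set y1 := \sum_j lam j * (A j).1; set y2 := \sum_j lam j * (A j).2.
have kp : 0 < (k%:R : R) by rewrite ltr0n.
have ik : 0 <= (k%:R : R)^-1 by rewrite invr_ge0 ltW.
have cen : forall (f : 'I_n -> R) c, \sum_j lam j * (f j - c) = \sum_j lam j * f j - c.
  move=> f c; rewrite (eq_bigr (fun j => lam j * f j - lam j * c)); last by move=> j _; rewrite mulrBr.
  by rewrite sumrB -mulr_suml l1 mul1r.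
have su : \sum_j lam j * ((A j).2 - y2) = 0 by rewrite cen subrr.
have sv : \sum_j lam j * ((A j).1 - y1) = 0 by rewrite cen subrr.
case: (geo l0 l1 su sv) => [[s [h1 h2]]|[s [t [h1 h2 h3]]]].
  exists (mk s s (leqnn k)); rewrite !mk_val subnn mulr0n !mul0r addr0 divff ?gt_eqF // !mul1r.
  by split; lra.
set us := (A s).2 - y2 in h1 h3; set ut := (A t).2 - y2 in h2 h3.
set vs := (A s).1 - y1 in h3; set vt := (A t).1 - y1 in h3.
set D := us - ut.
have D0 : 0 < D by rewrite /D; lra.
set tau := - ut / D.
have tD : tau * D = - ut by rewrite /tau mulfVK // gt_eqF.
have t0 : 0 <= tau by rewrite /tau divr_ge0 // ?oppr_ge0 ltW.
have t1 : tau <= 1 by rewrite /tau ler_pdivrMr // mul1r /D; lra.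
have [p [pk [hp1 hp2]]] : exists p, (p <= k)%N /\ p%:R <= k%:R * tau /\ k%:R * tau <= p%:R + 1.
  apply: floorN; apply/andP; split; first exact: mulr_ge0 (ltW kp) t0.
  by rewrite -[X in _ <= X]mulr1; apply: ler_wpM2l => //; apply: ltW.
exists (mk s t pk); rewrite !mk_val natrB //.
set rho := p%:R / k%:R.
have e1 : (k%:R - p%:R) / k%:R = 1 - rho :> R by rewrite /rho; field; rewrite gt_eqF.
rewrite e1.
have r1 : rho <= tau by rewrite /rho ler_pdivrMr // mulrC.
have r2 : tau <= rho + k%:R^-1.
  have : tau <= (p%:R + 1) / k%:R by rewrite ler_pdivlMr // mulrC.
  by rewrite mulrDl mul1r.
have z1 : 0 <= tau * vs + (1 - tau) * vt.
  have key : D * (tau * vs + (1 - tau) * vt) = us * vt - ut * vs.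
    rewrite /tau /D; field; rewrite -/D gt_eqF //.
  by rewrite -(pmulr_rge0 _ D0) key.
have z2 : tau * us + (1 - tau) * ut = 0.
  by rewrite /tau /D; field; rewrite -/D gt_eqF.
have [a1 b1] := cA s; have [a2 b2] := cA t.
move: a1 b1 a2 b2 z1 z2; rewrite /us /ut /vs /vt.
case/andP => a1 a1'; case/andP => b1 b1'; case/andP => c1 c1'; case/andP => d1 d1' z1 z2.
have m1 : 0 <= (tau - rho) * (1 - ((A s).1 - (A t).1)) by apply: mulr_ge0; lra.
have m2 : 0 <= (tau - rho) * (1 - ((A s).2 - (A t).2)) by apply: mulr_ge0; lra.
split; nra.
Qed.

Section Main.
Variable R : realFieldType.
Variables (n k : nat).

Lemma alloc_sum (delta : R) (s1 s2 : {set kUN n k}) (f : 'I_n -> R) :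
  \sum_j alloc (SA n k delta) s1 s2 j * f j =
  F delta (fun mu => \sum_j kUN_prob R mu j * f j) s1 s2.
Proof.
rewrite /F /=.
rewrite (eq_bigr (fun j => \sum_mu SA_select R delta s1 s2 mu * kUN_prob R mu j * f j));
  last by move=> j _; rewrite mulr_suml.
rewrite exchange_big /=; apply: eq_bigr => mu _; rewrite mulr_sumr.
by apply: eq_bigr => j _; rewrite mulrA.
Qed.

Lemma prob_sum (mu : kUN n k) : (0 < k)%N -> \sum_j kUN_prob R mu j = 1.
Proof.
move=> k0; rewrite /kUN_prob -mulr_suml -natr_sum (eqP (valP mu)) divff //.
by rewrite pnatr_eq0 -lt0n.
Qed.

Lemma V01 (A : 'I_n -> R * R) (pr : R * R -> R) (mu : kUN n k) : (0 < k)%N ->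
  (forall j, 0 <= pr (A j) <= 1) ->
  0 <= \sum_j kUN_prob R mu j * pr (A j) <= 1.
Proof.
move=> k0 h; have p0 : forall j, 0 <= kUN_prob R mu j.
  by move=> j; rewrite /kUN_prob divr_ge0 ?ler0n.
apply/andP; split.
  by apply: sumr_ge0 => j _; apply: mulr_ge0 => //; case/andP: (h j).
rewrite -(prob_sum mu k0); apply: ler_sum => j _.
by rewrite -[X in _ <= X]mulr1; apply: ler_wpM2l => //; case/andP: (h j).
Qed.

End Main.

Theorem proposition2 (R : realFieldType) (k : nat) (delta : R) :
  (0 < k)%N -> 0 < delta <= 1 ->
  (forall (n : nat) (A : 'I_n -> R * R), collection A ->
     exists s1 s2 : signal (SA n k delta), is_PNE (SA n k delta) A s1 s2) /\
  (forall n : nat, anonymous (SA n k delta)) /\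
  (forall (n : nat) (A : 'I_n -> R * R), collection A ->
     forall s1 s2 : signal (SA n k delta), is_PNE (SA n k delta) A s1 s2 ->
     ~ (exists y : R * R, in_conv A y /\
          (outcome (SA n k delta) A s1 s2).1 + delta + k%:R^-1 < y.1 /\
          (outcome (SA n k delta) A s1 s2).2 + delta + k%:R^-1 < y.2)).
Proof.
move=> k0 /andP[d0 d1]; split; last split.
- move=> n A cA.
  case: (pickP (fun _ : kUN n k => true)) => [t0 _|none].
    have [L1 [L2 [H1 H2]]] := exists_eq d0 d1
      (fun mu => \sum_j kUN_prob R mu j * (A j).1)
      (fun mu => \sum_j kUN_prob R mu j * (A j).2) t0.
    exists L1, L2; split => s' /=; rewrite !alloc_sum; [exact: H1 | exact: H2].
  exists set0, set0; split => s' /=; rewrite !alloc_sum /F !big1 // => mu;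
    by have := none mu.
- move=> n s1 s2 j /=; apply: eq_bigr => mu _.
  by rewrite /SA_select andbC setIC setUC.
move=> n A cA s1 s2 [H1 H2] [y [[lam [l0 [l1 ye]]] [hy1 hy2]]].
move: hy1 hy2; rewrite ye /= !alloc_sum => hy1 hy2.
have [mu [m1 m2]] := round k0 cA l0 l1.
pose V1 := fun mu : kUN n k => \sum_j kUN_prob R mu j * (A j).1.
pose V2 := fun mu : kUN n k => \sum_j kUN_prob R mu j * (A j).2.
have V1b : forall mu, 0 <= V1 mu <= 1.
  by move=> m; apply: V01 => // j; case: (cA j).
have V2b : forall mu, 0 <= V2 mu <= 1.
  by move=> m; apply: V01 => // j; case: (cA j).
have H1' : forall L, F delta V1 L s2 <= F delta V1 s1 s2.
  by move=> L; have := H1 L; rewrite /= !alloc_sum.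
have H2' : forall L, F delta V2 L s1 <= F delta V2 s2 s1.
  by move=> L; have := H2 L; rewrite /= !alloc_sum FC [F _ _ s2 s1]FC.
have [c1 c1'] := close d0 mu V1b H1'.
have [c2 c2'] := close d0 mu V2b H2'.
set Y1 := \sum_j lam j * (A j).1 in hy1 m1.
set Y2 := \sum_j lam j * (A j).2 in hy2 m2.
have m1' : Y1 - k%:R^-1 <= V1 mu := m1.
have m2' : Y2 - k%:R^-1 <= V2 mu := m2.
have hy1' : F delta V1 s1 s2 + delta + k%:R^-1 < Y1 := hy1.
have hy2' : F delta V2 s2 s1 + delta + k%:R^-1 < Y2 by rewrite FC; exact: hy2.
have n2 : mu \notin s2 by apply/negP => /c1; lra.
have n1 : mu \notin s1 by apply/negP => /c2; lra.
have := c1' n1 n2; lra.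
Qed.
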